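(* Suppose there exist $R>r>0$ such that $g(x)\le\min\{Rx+g(x^* )-Rx^*,\ rx+g(x^* )-rx^*\}$ for all $x\in[0,1]$. Then for every $c\ge1/(R-r)$, $$\lambda g(x^* )-\sup_{\mathbf x\in[0,1]^c}\mathcal R(\mathbf x)\ \ge\ \lambda\min\{1,r/2\}\,x^*\sqrt{(R-r)/c}.$$
   Context: Setting. Fix $c\in\mathbb N$ (number of identical units of a single reusable resource), an arrival rate $\lambda>0$ and a mean usage duration $d>0$, with $x^*:=c/(\lambda d)\in(0,1)$. Let $g:[0,1]\to\mathbb R$ be concave, non-decreasing, with $g(0)=0$ (the reward function). A stock-dependent policy is a vector $\mathbf x=(x_1,\dots,x_c)\in[0,1]^c$, where $x_j$ is the admission probability used when exactly $j$ units are available (the admission probability is $0$ when no unit is available). Its steady-state distribution is the unique probability vector $\pi=(\pi_0,\dots,\pi_c)$ satisfying $\pi_j\lambda x_j=\pi_{j-1}(c-j+1)/d$ for all $j\in\{1,\dots,c\}$, and its long-run average reward is $\mathcal R(\mathbf x)=\sum_{j=1}^c\pi_j\lambda g(x_j)$. *)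

(* Defs.v *)
From HB Require Import structures.
From mathcomp Require Import all_boot all_order all_algebra.
From mathcomp Require Import reals.
Set Implicit Arguments. Unset Strict Implicit. Unset Printing Implicit Defensive.
Import Order.TTheory GRing.Theory Num.Theory.
Local Open Scope ring_scope.

Section Defs.
Variable R : realType.

Definition concave01 (g : R -> R) : Prop :=
  forall x y t : R, 0 <= x <= 1 -> 0 <= y <= 1 -> 0 <= t <= 1 ->
    t * g x + (1 - t) * g y <= g (t * x + (1 - t) * y).

Definition nondecr01 (g : R -> R) : Prop :=
  forall x y : R, 0 <= x -> x <= y -> y <= 1 -> g x <= g y.

Definition xstar (c : nat) (lam d : R) : R := c%:R / (lam * d).

(* a stock-dependent policy (x_1, ..., x_c) in [0,1]^c, stored as x : nat -> R
   (only indices 1..c are relevant) *)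
Definition policy (c : nat) (x : nat -> R) : Prop :=
  forall j : nat, (1 <= j <= c)%N -> 0 <= x j <= 1.

Definition steady_state (c : nat) (lam d : R) (x : nat -> R) (pi : nat -> R) : Prop :=
  [/\ forall j : nat, (j <= c)%N -> 0 <= pi j,
      \sum_(0 <= j < c.+1) pi j = 1 &
      forall j : nat, (1 <= j <= c)%N ->
        pi j * lam * x j = pi j.-1 * (c.+1 - j)%:R / d].

Definition reward (c : nat) (lam : R) (g : R -> R) (x pi : nat -> R) : R :=
  \sum_(1 <= j < c.+1) pi j * lam * g (x j).

End Defs.

(* Main.v *)
Require Import Defs.
From HB Require Import structures.
From mathcomp Require Import all_boot all_order all_algebra.
From mathcomp Require Import reals.
From mathcomp Require Import ring lra zify.
Import Order.TTheory GRing.Theory Num.Theory.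
Local Open Scope ring_scope.

Lemma count_lt (R : realType) (N m : nat) :
  \sum_(0 <= j < m) ((j < N)%N%:R : R) = (minn m N)%:R.
Proof.
elim: m => [|m IH]; first by rewrite big_geq // min0n.
rewrite big_nat_recr //= IH -natrD; congr (_%:R).
case: (ltnP m N) => h /=; lia.
Qed.

Lemma Ebound (R : realType) (c N : nat) (pi : nat -> R) (B : R) :
  (forall j, (j <= c)%N -> 0 <= pi j) ->
  \sum_(0 <= j < c.+1) pi j = 1 ->
  (forall n, (n <= c)%N -> pi n <= B) -> 0 <= B ->
  N%:R * (1 - N%:R * B) <= \sum_(0 <= j < c.+1) j%:R * pi j.
Proof.
move=> p0 p1 pB B0.
apply: (@le_trans _ _ (\sum_(0 <= j < c.+1) (N%:R * pi j - N%:R * B * (j < N)%N%:R))).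
  rewrite sumrB -mulr_sumr p1 mulr1 -mulr_sumr count_lt.
  rewrite mulrBr mulr1 lerB //.
  rewrite -mulrA ler_wpM2l // mulrC ler_wpM2r //.
  by rewrite ler_nat geq_minr.
apply: ler_sum_nat => j /andP [_ hj].
have hjc : (j <= c)%N by [].
case: (ltnP j N) => h /=.
  rewrite mulr1 -mulrBr.
  have : N%:R * (pi j - B) <= 0.
    apply: mulr_ge0_le0 => //; rewrite subr_le0; exact: pB.
  move=> H; apply: le_trans H _; apply: mulr_ge0 => //; exact: p0.
rewrite mulr0 subr0 ler_wpM2r //; first exact: p0.
by rewrite ler_nat.
Qed.
Lemma telesc (R : realType) (c : nat) (xs : R) (x pi : nat -> R) :
  c%:R != 0 :> R ->
  (forall j, (1 <= j <= c)%N -> pi j * x j = xs * pi j.-1 * (c.+1 - j)%:R / c%:R) ->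
  forall n, (n <= c)%N ->
  \sum_(1 <= j < n.+1) pi j * (xs - x j) =
  xs * (pi n - pi 0%N + \sum_(0 <= i < n) pi i * i%:R / c%:R).
Proof.
move=> c0 H; elim=> [|n IH] hn.
  by rewrite big_geq // big_geq // subrr addr0 mulr0.
rewrite big_nat_recr //= IH ?(ltnW hn) // big_nat_recr //=.
rewrite mulrBr H; last by rewrite /= hn.
rewrite /= subSS natrB ?(ltnW hn) //.
by field.
Qed.

Lemma final_ineq (R : realType) (c r Rb m eps B E N : R) :
  0 < c -> 0 < r -> 0 < m -> m <= 1 -> m <= r/2 -> 0 < eps ->
  eps^+2 * c = Rb - r -> 1 <= eps * c -> eps * c / 2 <= N -> N <= eps * c ->
  0 <= B -> 0 <= E -> N * (1 - N * B) <= E ->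
  m * eps <= r * E / c + (Rb - r) * B.
Proof.
move=> c0 r0 m0 m1 mr e0 he k1 hN1 hN2 B0 E0 hE.
rewrite -he.
have hc : r * E / c = (r * E) * c^-1 by [].
have ci : c * c^-1 = 1 by rewrite mulfV // gt_eqF.
have ci0 : 0 < c^-1 by rewrite invr_gt0.
set k := eps * c in k1 hN1 hN2.
have -> : eps ^+ 2 * c * B = eps * (k * B) by rewrite /k; ring.
have rE : 0 <= r * E / c by apply: divr_ge0; [apply: mulr_ge0; lra | lra].
case: (lerP 1 (k * B)) => hkB.
  have : m * eps <= eps * (k * B) by nra.
  lra.
(* goal * c : m k <= r E + k^2 B *)
suff : m * k <= r * E + eps * (k * B) * c.
  move=> h.
  have h2 : (m * eps) * c <= (r * E / c + eps * (k * B)) * c.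
    rewrite mulrDl divfK ?gt_eqF //.
    have -> : m * eps * c = m * k by rewrite /k; ring.
    lra.
  rewrite -(ler_pM2r c0); exact h2.
have key : k <= 2 * N - 2 * N ^+ 2 * B + k ^+ 2 * B.
  have k0 : 0 < k by lra.
  have t0 : 0 <= k * B by rewrite mulr_ge0 // ltW.
  suff : k * k <= k * (2 * N - 2 * N ^+ 2 * B + k ^+ 2 * B).
    by rewrite ler_pM2l.
  have id : k * (2 * N - 2 * N ^+ 2 * B + k ^+ 2 * B) - k * k =
     (1 - k * B) * (k * (2 * N - k)) + (k * B) * (2 * N * (k - N)) by ring.
  have p1 : 0 <= (1 - k * B) * (k * (2 * N - k)).
    apply: mulr_ge0; first lra. apply: mulr_ge0; lra.
  have p2 : 0 <= (k * B) * (2 * N * (k - N)).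
    apply: mulr_ge0 => //. apply: mulr_ge0; lra.
  lra.
have e1 : eps * (k * B) * c = k ^+ 2 * B by rewrite /k; ring.
rewrite e1.
have h3 : 2 * m * E <= r * E by apply: ler_wpM2r => //; lra.
have h4 : 2 * m * (N * (1 - N * B)) <= 2 * m * E by apply: ler_wpM2l => //; lra.
have B2 : 0 <= k ^+ 2 * B by rewrite mulr_ge0 // sqr_ge0.
have h5 : m * (k ^+ 2 * B) <= k ^+ 2 * B by rewrite ler_piMl.
have h6 : m * k <= m * (2 * N - 2 * N ^+ 2 * B + k ^+ 2 * B) by rewrite ler_wpM2l // ltW.
have : m * (2 * N - 2 * N ^+ 2 * B + k ^+ 2 * B) = 2 * m * (N * (1 - N * B)) + m * (k ^+ 2 * B) by ring.
lra.
Qed.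

Theorem lemma5 (R : realType) (c : nat) (lam d : R) (g : R -> R) (Rb rb : R) :
  0 < lam -> 0 < d ->
  0 < xstar c lam d < 1 ->
  concave01 g -> nondecr01 g -> g 0 = 0 ->
  0 < rb -> rb < Rb ->
  (forall x : R, 0 <= x <= 1 ->
     g x <= Num.min (Rb * x + g (xstar c lam d) - Rb * xstar c lam d)
                    (rb * x + g (xstar c lam d) - rb * xstar c lam d)) ->
  1 / (Rb - rb) <= c%:R ->
  forall (x pi : nat -> R), policy c x -> steady_state c lam d x pi ->
    lam * Num.min 1 (rb / 2) * xstar c lam d * Num.sqrt ((Rb - rb) / c%:R)
      <= lam * g (xstar c lam d) - reward c lam g x pi.
Proof.
move=> l0 d0 /andP [xs0 xs1] _ _ g0 r0 rR hg hc x pi pol [p0 p1 bal].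
set xs := xstar c lam d in xs0 xs1 hg *.
set b := g xs in hg *.
have Rr0 : 0 < Rb - rb by lra.
have c0 : 0 < c%:R :> R.
  apply: lt_le_trans hc; by rewrite divr_gt0.
have cn0 : c%:R != 0 :> R by rewrite gt_eqF.
have H : forall j, (1 <= j <= c)%N ->
    pi j * x j = xs * pi j.-1 * (c.+1 - j)%:R / c%:R.
  move=> j hj; have e := bal j hj.
  have -> : pi j * x j = (pi j * lam * x j) / lam by field; rewrite gt_eqF.
  rewrite e /xs /xstar; field; rewrite ?gt_eqF //.
have hb : Rb * xs <= b.
  have := hg 0; rewrite g0 lexx ler01 => /(_ isT); rewrite le_min => /andP [h _]; lra.
have pt : forall j, (1 <= j < c.+1)%N ->
    rb * (pi j * (xs - x j)) + (Rb - rb) * (pi j * Num.max (xs - x j) 0)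
      <= pi j * (b - g (x j)).
  move=> j /andP [h1 h2].
  have hj : (1 <= j <= c)%N by rewrite h1.
  have pj : 0 <= pi j by apply: p0.
  have := hg (x j) (pol j hj); rewrite le_min => /andP [ha hbb].
  case: (lerP 0 (xs - x j)) => hD.
    have : (Rb) * (pi j * (xs - x j)) <= pi j * (b - g (x j)).
      rewrite mulrCA ler_wpM2l //; lra.
    lra.

  rewrite mulr0 mulr0 addr0.
  rewrite mulrCA ler_wpM2l //; lra.
set E := \sum_(0 <= j < c.+1) j%:R * pi j.
set Sp := \sum_(1 <= j < c.+1) pi j * Num.max (xs - x j) 0.
set B := pi 0%N + Sp / xs.
have hS1 : \sum_(1 <= j < c.+1) pi j * (xs - x j) = xs * (E / c%:R - pi 0%N).
  rewrite (telesc _ _ _ _ _ cn0 H _ (leqnn c)) /E big_nat_recr //=.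
  have -> : \sum_(0 <= i < c) pi i * i%:R / c%:R = (\sum_(0 <= i < c) i%:R * pi i) / c%:R.
    rewrite mulr_suml; apply: eq_bigr => i _; ring.
  by field.
have Sp0 : 0 <= Sp.
  rewrite /Sp big_nat_cond; apply: sumr_ge0 => j /andP [/andP [h1 h2] _]; apply: mulr_ge0; last by rewrite le_max lexx orbT.
  apply: p0; by [].
have B0 : 0 <= B by rewrite addr_ge0 ?p0 // divr_ge0 // ltW.
have pB : forall n, (n <= c)%N -> pi n <= B.
  move=> n hn.
  case: n hn => [|n] hn.
    by rewrite /B lerDl divr_ge0 // ltW.
  have hsplit : Sp = \sum_(1 <= j < n.+2) pi j * Num.max (xs - x j) 0
       + \sum_(n.+2 <= j < c.+1) pi j * Num.max (xs - x j) 0.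
    by rewrite /Sp (big_cat_nat _ (n := n.+2)).
  have hrest : 0 <= \sum_(n.+2 <= j < c.+1) pi j * Num.max (xs - x j) 0.
    rewrite big_nat_cond; apply: sumr_ge0 => j /andP [/andP [h1 h2] _]; apply: mulr_ge0; last by rewrite le_max lexx orbT.
    apply: p0; by [].
  have hfirst : \sum_(1 <= j < n.+2) pi j * (xs - x j)
                <= \sum_(1 <= j < n.+2) pi j * Num.max (xs - x j) 0.
    apply: ler_sum_nat => j /andP [h1 h2]; apply: ler_wpM2l.
      apply: p0; apply: leq_trans hn; by [].
    by rewrite le_max lexx.
  rewrite (telesc _ _ _ _ _ cn0 H _ hn) in hfirst.
  have hnn : 0 <= \sum_(0 <= i < n.+1) pi i * i%:R / c%:R.
    rewrite big_nat_cond; apply: sumr_ge0 => i /andP [/andP [_ hi] _]; apply: divr_ge0 => //; apply: mulr_ge0 => //.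
    apply: p0; apply: leq_trans hn; by apply: ltnW.
  have : xs * (pi n.+1 - pi 0%N) <= Sp.
    have : xs * (pi n.+1 - pi 0%N) <= xs * (pi n.+1 - pi 0%N + \sum_(0 <= i < n.+1) pi i * i%:R / c%:R).
      apply: ler_wpM2l; [exact: ltW | lra].
    lra.
  move=> h.
  have : pi n.+1 - pi 0%N <= Sp / xs.
    by rewrite ler_pdivlMr // mulrC.
  rewrite /B; lra.
have E0 : 0 <= E.
  rewrite /E big_nat_cond; apply: sumr_ge0 => j /andP [/andP [_ hj] _]; apply: mulr_ge0 => //; exact: p0.
have hdec : lam * b - reward c lam g x pi
    = lam * (b * pi 0%N + \sum_(1 <= j < c.+1) pi j * (b - g (x j))).
  rewrite /reward.
  have e1 : b = b * \sum_(0 <= j < c.+1) pi j by rewrite p1 mulr1.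
  rewrite {1}e1 big_ltn // mulrDr.
  have -> : \sum_(1 <= j < c.+1) pi j * lam * g (x j)
      = lam * \sum_(1 <= j < c.+1) pi j * g (x j).
    rewrite mulr_sumr; apply: eq_bigr => i _; ring.
  have -> : \sum_(1 <= j < c.+1) pi j * (b - g (x j))
      = b * \sum_(1 <= j < c.+1) pi j - \sum_(1 <= j < c.+1) pi j * g (x j).
    rewrite mulr_sumr -sumrB; apply: eq_bigr => i _; ring.
  ring.
rewrite hdec.
have hsum : rb * (xs * (E / c%:R - pi 0%N)) + (Rb - rb) * Sp
    <= \sum_(1 <= j < c.+1) pi j * (b - g (x j)).
  rewrite -hS1 mulr_sumr /Sp mulr_sumr -big_split /=.
  exact: ler_sum_nat.
have hpi0 : Rb * xs * pi 0%N <= b * pi 0%N by rewrite ler_wpM2r // p0.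
have hmain : xs * (rb * E / c%:R + (Rb - rb) * B)
    <= b * pi 0%N + \sum_(1 <= j < c.+1) pi j * (b - g (x j)).
  have -> : xs * (rb * E / c%:R + (Rb - rb) * B)
     = rb * (xs * (E / c%:R - pi 0%N)) + (Rb - rb) * Sp + Rb * xs * pi 0%N.
    rewrite /B; field; rewrite ?gt_eqF //.
  lra.
set eps := Num.sqrt ((Rb - rb) / c%:R).
have eps0 : 0 < eps by rewrite sqrtr_gt0 divr_gt0.
have heps : eps ^+ 2 * c%:R = Rb - rb.
  rewrite /eps sqr_sqrtr ?divr_ge0 ?ltW // divfK //.
have k1 : 1 <= eps * c%:R.
  have : 1 <= (eps * c%:R) ^+ 2.
    have -> : (eps * c%:R) ^+ 2 = (Rb - rb) * c%:R by rewrite exprMn -heps; ring.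
    by rewrite -ler_pdivrMl // mulr1 -[X in X <= _]mul1r.
  have : 0 <= eps * c%:R by rewrite mulr_ge0 ?ltW.
  nra.
set k := eps * c%:R in k1.
set N := Num.truncn k.
have hN1 : (N%:R : R) <= k by rewrite truncn_le; lra.
have hN2 : k < N.+1%:R by apply: truncnS_gt.
have hN3 : (1 <= N)%N by rewrite truncn_gt0.
have hN3' : 1 <= (N%:R : R) by rewrite ler1n.
have hN2' : k < N%:R + 1 by rewrite -natr1 in hN2.
have m0 : 0 < Num.min 1 (rb / 2) by rewrite lt_min ltr01 divr_gt0.
have m1 : Num.min 1 (rb / 2) <= 1 by rewrite ge_min lexx.
have mr : Num.min 1 (rb / 2) <= rb / 2 by rewrite ge_min lexx orbT.
have hk2 : k / 2 <= N%:R by lra.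
have hf := final_ineq _ _ _ _ _ _ _ _ _ c0 r0 m0 m1 mr eps0 heps k1 hk2 hN1 B0 E0
   (Ebound _ _ N _ _ p0 p1 pB B0).
have h2 : xs * (Num.min 1 (rb / 2) * eps) <= xs * (rb * E / c%:R + (Rb - rb) * B).
  by apply: ler_wpM2l; [exact: ltW | exact: hf].
have e3 : lam * Num.min 1 (rb / 2) * xs * eps = lam * (xs * (Num.min 1 (rb / 2) * eps)) by ring.
rewrite e3; apply: ler_wpM2l; first exact: ltW.
exact: le_trans h2 hmain.
Qed.
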